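(* Let $G$ be a group with a finite generating set $S$ such that the word length $l=|\cdot|_S:G\to\mathbb{Z}$ is a $\delta$-hyperbolic length function for some $\delta\in\mathbb{Z}$, $\delta\geqslant0$. Let $H=G\times G$ and define $l_H:H\to\mathbb{Z}^2$ by $l_H(f,g)=(l(f),l(g))$, where $\mathbb{Z}^2$ carries the right lexicographic order. Then for every integer $\delta_1>\delta$, $l_H$ is a $\delta_H$-hyperbolic length function on $H$, where $\delta_H=(\delta_1,\delta_1)$.
   Context: The right lexicographic order on $\mathbb{Z}^2$: $(a,b)\leqslant(c,d)$ iff $b<d$, or $b=d$ and $a\leqslant c$. For an ordered abelian group $\Lambda$ (with ordered divisible hull $\Lambda_{\mathbb{Q}}\supseteq\Lambda$), a length function on a group $K$ is $l:K\to\Lambda$ with $l(k)\geqslant0$, $l(1)=0$, $l(k)=l(k^{-1})$, $l(kk')\leqslant l(k)+l(k')$. With $c(g,h)=\tfrac12(l(g)+l(h)-l(g^{-1}h))\in\Lambda_{\mathbb{Q}}$, $l$ is $\delta$-hyperbolic ($\delta\in\Lambda$) if $c(f,g)\geqslant\min\{c(f,h),c(g,h)\}-\delta$ for all $f,g,h\in K$. The word length $|g|_S$ is the minimal length of a word in $S^{\pm1}$ representing $g$. *)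

(* Defs.v *)
From HB Require Import structures.
From mathcomp Require Import all_boot all_order all_algebra.
From Stdlib Require Import List.
Set Implicit Arguments. Unset Strict Implicit. Unset Printing Implicit Defensive.
Import Order.TTheory GRing.Theory Num.Theory.
Local Open Scope ring_scope.

Definition is_group (G : Type) (mul : G -> G -> G) (one : G) (inv : G -> G) : Prop :=
  [/\ (forall x y z, mul x (mul y z) = mul (mul x y) z),
      (forall x, mul one x = x), (forall x, mul x one = x),
      (forall x, mul (inv x) x = one) & (forall x, mul x (inv x) = one)].

(* A word in S^{+-1}: a list of letters (s, b), meaning s if b = false and s^-1 if b = true. *)
Definition word_ok (G : Type) (S : list G) (w : list (G * bool)) : Prop :=
  List.Forall (fun x => List.In x.1 S) w.

Definition word_eval (G : Type) (mul : G -> G -> G) (one : G) (inv : G -> G)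
  (w : list (G * bool)) : G :=
  foldr (fun x acc => mul (if x.2 then inv x.1 else x.1) acc) one w.

Definition generates (G : Type) (mul : G -> G -> G) (one : G) (inv : G -> G)
  (S : list G) : Prop :=
  forall g, exists w, word_ok S w /\ word_eval mul one inv w = g.

Definition is_word_length (G : Type) (mul : G -> G -> G) (one : G) (inv : G -> G)
  (S : list G) (g : G) (n : nat) : Prop :=
  (exists w, [/\ word_ok S w, size w = n & word_eval mul one inv w = g]) /\
  (forall w, word_ok S w -> word_eval mul one inv w = g -> (n <= size w)%N).

Definition is_length_fun_Z (G : Type) (mul : G -> G -> G) (one : G) (inv : G -> G)
  (l : G -> int) : Prop :=
  [/\ (forall k, 0 <= l k), l one = 0, (forall k, l k = l (inv k)) &
      (forall k k', l (mul k k') <= l k + l k')].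

Definition cZ (G : Type) (mul : G -> G -> G) (inv : G -> G) (l : G -> int) (g h : G) : rat :=
  (l g + l h - l (mul (inv g) h))%:~R / 2%:R.

Definition hyperbolic_Z (G : Type) (mul : G -> G -> G) (inv : G -> G)
  (l : G -> int) (delta : int) : Prop :=
  forall f g h, Order.min (cZ mul inv l f h) (cZ mul inv l g h) - delta%:~R
                <= cZ mul inv l f g.

Definition rlex_le (R : numDomainType) (x y : R * R) : bool :=
  (x.2 < y.2) || ((x.2 == y.2) && (x.1 <= y.1)).

Definition rlex_min (R : numDomainType) (x y : R * R) : R * R :=
  if rlex_le x y then x else y.

Definition pair_add (R : numDomainType) (x y : R * R) : R * R := (x.1 + y.1, x.2 + y.2).
Definition pair_sub (R : numDomainType) (x y : R * R) : R * R := (x.1 - y.1, x.2 - y.2).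

Definition is_length_fun_Z2 (K : Type) (mul : K -> K -> K) (one : K) (inv : K -> K)
  (l : K -> int * int) : Prop :=
  [/\ (forall k, rlex_le (0, 0) (l k)), l one = (0, 0), (forall k, l k = l (inv k)) &
      (forall k k', rlex_le (l (mul k k')) (pair_add (l k) (l k')))].

Definition toQ2 (x : int * int) : rat * rat := (x.1%:~R, x.2%:~R).

Definition cZ2 (K : Type) (mul : K -> K -> K) (inv : K -> K) (l : K -> int * int)
  (g h : K) : rat * rat :=
  let s := toQ2 (pair_sub (pair_add (l g) (l h)) (l (mul (inv g) h))) in
  (s.1 / 2%:R, s.2 / 2%:R).

Definition hyperbolic_Z2 (K : Type) (mul : K -> K -> K) (inv : K -> K)
  (l : K -> int * int) (delta : int * int) : Prop :=
  forall f g h, rlex_le (pair_sub (rlex_min (cZ2 mul inv l f h) (cZ2 mul inv l g h)) (toQ2 delta))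
                        (cZ2 mul inv l f g).

Definition prod_mul (G : Type) (mul : G -> G -> G) (x y : G * G) : G * G :=
  (mul x.1 y.1, mul x.2 y.2).
Definition prod_inv (G : Type) (inv : G -> G) (x : G * G) : G * G := (inv x.1, inv x.2).

(* Main.v *)
Require Import Defs.
From HB Require Import structures.
From mathcomp Require Import all_boot all_order all_algebra.
Import Order.TTheory GRing.Theory Num.Theory.
Local Open Scope ring_scope.

Lemma rlex_le_comp (x y : int * int) : x.1 <= y.1 -> x.2 <= y.2 -> rlex_le x y.
Proof.
move=> h1 h2; rewrite /rlex_le; move: h2; rewrite le_eqVlt => /orP[/eqP->|->].
  by rewrite eqxx h1 orbT.
by [].
Qed.

Lemma rlex_min2 (x y : rat * rat) :
  (rlex_min x y).2 = Order.min x.2 y.2.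
Proof.
rewrite /rlex_min /rlex_le; case: ifP => /orP.
  case=> [h|/andP[/eqP e _]]; first by rewrite (min_idPl (ltW h)).
  by rewrite e minxx.
move=> hn.
have h1 : y.2 <= x.2.
  rewrite leNgt; apply/negP => hl; apply: hn; by left.
case: (eqVneq x.2 y.2) => [e|ne]; first by rewrite e minxx.
by rewrite (min_idPr h1).
Qed.

Theorem mainTheorem12 (G : Type) (mul : G -> G -> G) (one : G) (inv : G -> G)
  (hG : is_group mul one inv) (S : list G) (hS : generates mul one inv S)
  (wl : G -> nat) (hwl : forall g, is_word_length mul one inv S g (wl g))
  (delta : int) (hdelta : 0 <= delta)
  (hlen : is_length_fun_Z mul one inv (fun g => (wl g)%:Z))
  (hhyp : hyperbolic_Z mul inv (fun g => (wl g)%:Z) delta)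
  (delta1 : int) (hd1 : delta < delta1) :
  let lH := fun x : G * G => ((wl x.1)%:Z, (wl x.2)%:Z) in
  is_length_fun_Z2 (prod_mul mul) (one, one) (prod_inv inv) lH /\
  hyperbolic_Z2 (prod_mul mul) (prod_inv inv) lH (delta1, delta1).
Proof.
move=> lH; case: hlen => h0 h1 hi ht; split.
  split.
  - by move=> k; apply: rlex_le_comp.
  - by rewrite /lH /= h1.
  - by move=> k; rewrite /lH /= (hi k.1) (hi k.2).
  - by move=> k k'; apply: rlex_le_comp; apply: ht.
move=> f g h; rewrite /rlex_le; apply/orP; left.
rewrite /pair_sub /= rlex_min2 /=.
have H := hhyp f.2 g.2 h.2.
rewrite /cZ /= in H.
apply: lt_le_trans H.
rewrite ltrD2l ltrN2 ltr_int //.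
Qed.
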